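(* Let $k$ be a positive integer. If $H$ is a thickened $4k$-star, then $\mathrm{ecrw}(H)\ge k$.
   Context: A thickened $n$-star is the graph $S_{n,n}$ obtained from the star $K_{1,n}$ by replacing each edge with $n$ internally vertex-disjoint paths of length 2; explicitly, vertices $c$, $u_1,\dots,u_n$ and $v_{i,j}$ ($i,j\in[n]$), with edges $cv_{i,j}$ and $u_iv_{i,j}$. A tree-cut decomposition of a graph $G$ is a pair $\mathcal{T}=(T,\{X_t\}_{t\in V(T)})$ where $T$ is a tree and the bags $X_t\subseteq V(G)$ are pairwise disjoint (possibly empty) with $\bigcup_{t\in V(T)}X_t=V(G)$. For a node $t$ of $T$, let $T_1,\dots,T_m$ be the connected components of $T-t$ and $Z_i=\bigcup_{s\in V(T_i)}X_s$; $\mathrm{cross}_{\mathcal{T}}(t)$ is the number of edges of $G$ whose two endpoints lie in two distinct sets among $Z_1,\dots,Z_m$ (if $T$ has one node, $\mathrm{cross}_{\mathcal T}(t)=0$). The crossing number of $\mathcal{T}$ is $\max_{t}\mathrm{cross}_{\mathcal{T}}(t)$, and the thickness of $\mathcal{T}$ is $\max_t|X_t|$. The edge-crossing width of $\mathcal T$ is the maximum of its crossing number and its thickness, and $\mathrm{ecrw}(G)$ is the minimum edge-crossing width over all tree-cut decompositions of $G$. *)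

(* Defs.v *)
From mathcomp Require Import all_boot.
Set Implicit Arguments. Unset Strict Implicit. Unset Printing Implicit Defensive.

(* A simple graph: vertex finType V with symmetric irreflexive adjacency E.
   Edges are the 2-element subsets {u,v} with E u v. *)

Definition num_edges (V : finType) (E : rel V) (P : V -> V -> bool) : nat :=
  #|[set A : {set V} | [exists u, exists v,
       [&& A == [set u; v], E u v & P u v]]]|.

Definition is_tree (N : finType) (tT : rel N) : Prop :=
  [/\ 0 < #|N|,
      symmetric tT, irreflexive tT,
      (forall a b, connect tT a b) &
      (* acyclic: no cycle x -> p -> x with at least 3 distinct vertices *)
      (forall x p, uniq (x :: p) -> path tT x p -> tT (last x p) x ->
         size p <= 1)].

Definition is_tree_cut_decomp (V : finType) (N : finType) (tT : rel N)
  (X : N -> {set V}) : Prop :=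
  [/\ is_tree tT,
      (forall s t, s != t -> [disjoint X s & X t]) &
      (\bigcup_(t : N) X t = [set: V])].

Definition tree_minus (N : finType) (tT : rel N) (t : N) : rel N :=
  [rel a b | [&& tT a b, a != t & b != t]].

Definition cross (V : finType) (E : rel V) (N : finType) (tT : rel N)
  (X : N -> {set V}) (t : N) : nat :=
  num_edges E (fun u v => [exists s1, exists s2,
     [&& u \in X s1, v \in X s2, s1 != t, s2 != t &
         ~~ connect (tree_minus tT t) s1 s2]]).

Definition crossing_number (V : finType) (E : rel V) (N : finType)
  (tT : rel N) (X : N -> {set V}) : nat :=
  \max_(t : N) cross E tT X t.

Definition thickness (V : finType) (N : finType) (X : N -> {set V}) : nat :=
  \max_(t : N) #|X t|.

Definition ec_width (V : finType) (E : rel V) (N : finType)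
  (tT : rel N) (X : N -> {set V}) : nat :=
  maxn (crossing_number E tT X) (thickness X).

(* ---- The thickened n-star S_{n,n} ----
   vertices: inl (inl tt) = c, inl (inr i) = u_i, inr (i,j) = v_{i,j} *)
Definition sstar_V (n : nat) : finType := ((unit + 'I_n) + ('I_n * 'I_n))%type.

Definition sstar_adj (n : nat) : rel (sstar_V n) :=
  fun x y =>
    match x, y with
    | inl (inl _), inr _ => true
    | inr _, inl (inl _) => true
    | inl (inr i), inr (i', _) => i == i'
    | inr (i', _), inl (inr i) => i == i'
    | _, _ => false
    end.

(* Main.v *)
Require Import Defs.
From mathcomp Require Import all_boot.
From mathcomp Require Import zify.
Set Implicit Arguments. Unset Strict Implicit.

Section Tree.
Variables (N : finType) (tT : rel N).
Hypothesis Htree : is_tree tT.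

Lemma tm_sym t : symmetric (tree_minus tT t).
Proof.
case: Htree => _ sym _ _ _ x y; rewrite /tree_minus /= sym; by case: (x != t); case: (y != t); rewrite ?andbT ?andbF.
Qed.

Definition redge (a b : N) : rel N :=
  [rel x y | tT x y && ~~ (((x == a) && (y == b)) || ((x == b) && (y == a)))].

Lemma redge_sym a b : symmetric (redge a b).
Proof.
case: Htree => _ sym _ _ _ x y; rewrite /redge /= sym; by case: (x==a); case: (y==b); case: (x==b); case: (y==a).
Qed.

Lemma no_cycle_edge a b : tT a b -> ~~ connect (redge a b) a b.
Proof.
case: Htree => _ sym irr _ acyc Hab; apply/negP => /connectP [p Hp Hl].
have Hne : a != b by apply/eqP => E; move: Hab; rewrite E (irr b).
move: Hl Hne; case: (shortenP Hp) => p' Hp' Hu _ E Hne.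
case: p' Hp' Hu E => [|x [|y q]] Hp' Hu E.
- by rewrite /= E eqxx in Hne.
- rewrite /= in E; subst x; move: Hp' => /= /andP [/andP [_ H] _].
  by rewrite !eqxx in H.
- have := acyc a [:: x, y & q] Hu.
  have Hp2 : path tT a [:: x, y & q].
    by apply: (sub_path _ Hp') => u v /andP [].
  by rewrite Hp2 -E sym Hab => /(_ isT isT).
Qed.

Lemma tm_redge s a b : tT a b -> (s == a) || (s == b) ->
  subrel (tree_minus tT s) (redge a b).
Proof.
move=> _ Hs x y; rewrite /tree_minus /redge /= => /and3P [H1 H2 H3]; rewrite H1 /=.
apply/negP => /orP [] /andP [/eqP ? /eqP ?]; subst;
  case/orP: Hs => /eqP ?; subst; by rewrite ?eqxx in H2 H3.
Qed.

Lemma sep a s u w : tT a s -> connect (tree_minus tT a) s u ->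
  connect (tree_minus tT a) u w -> ~~ connect (tree_minus tT s) a w.
Proof.
move=> Has H1 H2; apply/negP => H3.
have Hsw : connect (tree_minus tT a) s w := connect_trans H1 H2.
have sub1 : forall t, (t == a) || (t == s) ->
   subrel (connect (tree_minus tT t)) (connect (redge a s)).
  move=> t Ht; apply: connect_sub => x y Hxy; apply: connect1.
  exact: (tm_redge Has Ht Hxy).
have A := sub1 s (introT orP (or_intror (eqxx s))) _ _ H3.
have B := sub1 a (introT orP (or_introl (eqxx a))) _ _ Hsw.
rewrite (sym_connect_sym (@redge_sym a s)) in B.
have := no_cycle_edge Has; by rewrite (connect_trans A B).
Qed.

Lemma exists_nb a u : a != u -> exists2 s, tT a s & connect (tree_minus tT a) s u.
Proof.
case: Htree => _ _ _ conn _ Hau.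
case/connectP: (conn a u) => p Hp Hl.
rewrite Hl in Hau *; move: Hau; case: (shortenP Hp) => p' Hp' Hu _ Hau.
case: p' Hp' Hu Hau => [|s q] Hp' Hu Hau; first by rewrite /= eqxx in Hau.
move: Hp' => /= /andP [Has Hq]; exists s => //.
apply/connectP; exists q => //.
apply: (sub_in_path (P := [pred x | x != a])) Hq.
  move=> x y Hx Hy Hxy; rewrite /tree_minus /= Hxy; rewrite !inE in Hx Hy; by rewrite Hx Hy.
move: Hu; rewrite /= in_cons negb_or => /andP [/andP [H1 H2] _].
rewrite /= eq_sym H1 /=; apply/allP => x Hx; apply/eqP => E; subst.
by rewrite Hx in H2.
Qed.
End Tree.
Lemma edges_ge (V : finType) (E : rel V) (P : V -> V -> bool) (I : finType)
  (a : V) (f : I -> V) (J : {set I}) :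
  injective f -> (forall j, j \in J -> [&& a != f j, E a (f j) & P a (f j)]) ->
  #|J| <= num_edges E P.
Proof.
move=> finj H; rewrite /num_edges.
rewrite -(@card_in_imset _ _ (fun j => [set a; f j]) J).
  apply: subset_leq_card; apply/subsetP => A /imsetP [j Hj ->]; rewrite inE.
  apply/existsP; exists a; apply/existsP; exists (f j).
  by case/and3P: (H j Hj) => _ -> ->; rewrite eqxx.
move=> j1 j2 H1 H2 /= Heq.
have: f j1 \in [set a; f j2] by rewrite -Heq !inE eqxx orbT.
rewrite !inE => /orP [/eqP E1|/eqP E1]; last exact: finj.
by case/and3P: (H j1 H1); rewrite E1 eqxx.
Qed.

Lemma card_pre (V I : finType) (f : I -> V) (A : {set V}) :
  injective f -> #|[set j | f j \in A]| <= #|A|.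
Proof.
move=> finj; rewrite -(card_imset _ finj); apply: subset_leq_card.
by apply/subsetP => x /imsetP [j]; rewrite inE => Hj ->.
Qed.

Lemma cardU_le (I : finType) (A B : {set I}) : #|A :|: B| <= #|A| + #|B|.
Proof. by rewrite cardsU leq_subr. Qed.

Theorem lemma3p15 (k : nat) (hk : 0 < k)
  (N : finType) (tT : rel N) (X : N -> {set sstar_V (4 * k)}) :
  is_tree_cut_decomp tT X ->
  k <= ec_width (@sstar_adj (4 * k)) tT X.
Proof.
move=> [Htr Hdisj Hcov]; rewrite leqNgt; apply/negP => Hlt.
have Hcr t : cross (@sstar_adj (4 * k)) tT X t < k.
  apply: leq_ltn_trans Hlt; rewrite /ec_width; apply: leq_trans (leq_maxl _ _).
  rewrite /crossing_number; exact: (@leq_bigmax N (fun t => cross (@sstar_adj (4 * k)) tT X t) t).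
have Hth t : #|X t| < k.
  apply: leq_ltn_trans Hlt; rewrite /ec_width; apply: leq_trans (leq_maxr _ _).
  rewrite /thickness; exact: (@leq_bigmax N (fun t => #|X t|) t).
have Hin x : exists t, x \in X t.
  have : x \in [set: sstar_V (4 * k)] by rewrite inE.
  by rewrite -Hcov => /bigcupP [t _ H]; exists t.
have Huq x a b : x \in X a -> x \in X b -> a = b.
  move=> Ha Hb; case: (eqVneq a b) => // Hne.
  by rewrite (disjointFr (Hdisj a b Hne) Ha) in Hb.
have Hsym := Htr; case: Hsym => _ _ irr _ _.
pose c : sstar_V (4 * k) := inl (inl tt).
have [tc Hc] := Hin c.
have [i0 Hi0] : exists i0 : 'I_(4 * k), (inl (inr i0) : sstar_V (4 * k)) \notin X tc.
  case: (pickP [pred i : 'I_(4 * k) | (inl (inr i) : sstar_V (4 * k)) \notin X tc]) =>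
    [i Hi|H]; first by exists i.
  exfalso.
  have := @card_pre _ _ (fun i : 'I_(4 * k) => (inl (inr i) : sstar_V (4 * k))) (X tc).
  have -> : [set j : 'I_(4 * k) | (inl (inr j) : sstar_V (4 * k)) \in X tc] = setT.
    by apply/setP => i; rewrite !inE; move: (H i) => /= /negbFE ->.
  rewrite cardsT card_ord => /(_ _) H1.
  have := Hth tc. have : 4 * k <= #|X tc| by apply: H1 => i j [].
  lia.
pose u : sstar_V (4 * k) := inl (inr i0).
have [tu Hu] := Hin u.
have Htcu : tc != tu.
  by apply/eqP => E; rewrite E Hu in Hi0.
have [s Hts Hsu] := exists_nb Htr Htcu.
have Htcs : tc != s.
  by apply/eqP => E; rewrite E (irr s) in Hts.
pose f := fun j : 'I_(4 * k) => (inr (i0, j) : sstar_V (4 * k)).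
have finj : injective f by move=> j1 j2 [].
pose tv := fun j => odflt tc [pick t | f j \in X t].
have Hv j : f j \in X (tv j).
  rewrite /tv; case: pickP => [t Ht|H] //=.
  by have [t Ht] := Hin (f j); move: (H t) => /=; rewrite Ht.
pose F := [set j | (tv j != tc) && ~~ connect (tree_minus tT tc) tu (tv j)].
pose G := [set j | f j \in X tc].
pose H := [set j | [&& tv j != tc, connect (tree_minus tT tc) tu (tv j) & tv j != s]].
pose S := [set j | f j \in X s].
have Hcov2 : [set: 'I_(4 * k)] \subset (F :|: G) :|: (H :|: S).
  apply/subsetP => j _; rewrite !inE.
  case: (eqVneq (tv j) tc) => [E|Ne] /=.
    by rewrite -E Hv.
  case: (connect _ _ _) => /=; last by [].
  case: (eqVneq (tv j) s) => [E|_]; last by rewrite orbT.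
  by rewrite -E Hv !orbT.
have HF : #|F| <= cross (@sstar_adj (4 * k)) tT X tc.
  apply: (@edges_ge _ _ _ _ u f) => // j; rewrite inE => /andP [H1 H2].
  rewrite /u /f /= eqxx /=.
  apply/existsP; exists tu; apply/existsP; exists (tv j).
  by rewrite Hu Hv eq_sym Htcu H1 H2.
have HH : #|H| <= cross (@sstar_adj (4 * k)) tT X s.
  apply: (@edges_ge _ _ _ _ c f) => // j; rewrite inE => /and3P [H1 H2 H3].
  rewrite /c /f /=.
  apply/existsP; exists tc; apply/existsP; exists (tv j).
  by rewrite Hc Hv Htcs H3 (sep Htr Hts Hsu H2).
have HG : #|G| <= #|X tc| by apply: card_pre.
have HS : #|S| <= #|X s| by apply: card_pre.
have := subset_leq_card Hcov2; rewrite cardsT card_ord => Hc2.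
have Hsum : 4 * k <= (#|F| + #|G|) + (#|H| + #|S|).
  apply: (leq_trans Hc2); apply: leq_trans (cardU_le _ _) _.
  by apply: leq_add; apply: cardU_le.
have := Hcr tc; have := Hcr s; have := Hth tc; have := Hth s.
clearbody F G H S; lia.
Qed.
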